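(* Let $\mathrm P$ be a polymatroid on $E=\{1,\dots,m\}$ of type $\mathbf a$ and rank $r$. Then $$\frac{1}{r!}\deg_{\mathrm P}\Big(\big(\textstyle\sum_{i\in E}t_i h_{\{i\}}\big)^r\Big)=\sum_{\mathbf u\in B(\mathrm P)\cap\mathbb Z^E}\frac{t^{\mathbf u}}{\mathbf u!}$$ as polynomials in $\mathbb Q[t_1,\dots,t_m]$, where $t^{\mathbf u}=t_1^{u_1}\cdots t_m^{u_m}$ and $\mathbf u!=u_1!\cdots u_m!$.
   Context: A polymatroid $\mathrm P$ on $E$ of type $\mathbf a=(a_1,\dots,a_m)$ is a submodular, monotone function $\operatorname{rk}_{\mathrm P}:2^E\to\mathbb Z_{\ge0}$ with $\operatorname{rk}_{\mathrm P}(\emptyset)=0$ and $\operatorname{rk}_{\mathrm P}(\{i\})\le a_i$; rank $r=\operatorname{rk}_{\mathrm P}(E)$. Its base polytope is $B(\mathrm P)=\{x\in\mathbb R^E_{\ge0}:\sum_{i\in S}x_i\le\operatorname{rk}_{\mathrm P}(S)\ \forall S\subseteq E,\ \sum_{i\in E}x_i=r\}$. Let $n=\sum a_i$, $\widetilde E$ a set with $n$ elements, $\pi:\widetilde E\to E$ with $|\pi^{-1}(i)|=a_i$. Compatible pairs $I\le\mathcal F$: $I\subseteq\widetilde E$, chain $\mathcal F=\{F_1\subsetneq\dots\subsetneq F_{k+1}=E\}$ ($k\ge0$) such that $\pi^{-1}(A)\subseteq I$ implies $A\subseteq F_1$. The polystellahedral fan $\Sigma_{\mathbf a}\subset\mathbb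 R^{\widetilde E}$ has cones $\operatorname{cone}(-\mathbf e_{\widetilde E\setminus\pi^{-1}(F_1)},\dots,-\mathbf e_{\widetilde E\setminus\pi^{-1}(F_k)},\mathbf e_j:j\in I)$ (with $\mathbf e_U=\sum_{j\in U}\mathbf e_j$); $X_{\mathbf a}$ is its smooth projective toric variety with degree map $\deg_{X_{\mathbf a}}:A^n(X_{\mathbf a})\to\mathbb Z$. $x_S$ ($\emptyset\subseteq S\subsetneq E$) is the divisor class of the ray $\mathbb R_{\ge0}(-\mathbf e_{\widetilde E\setminus\pi^{-1}(S)})$, and $h_S=\sum_{T\subsetneq E,T\not\supseteq S}x_T$ for nonempty $S$. A flat of $\mathrm P$ is $F$ with $\operatorname{rk}_{\mathrm P}(F\cup e)>\operatorname{rk}_{\mathrm P}(F)$ for $e\notin F$. $\Sigma_{\mathrm P}$ is the subfan of cones $\sigma_{S\le\mathcal F}$ with $F_1,\dots,F_k$ proper flats of $\mathrm P$, $\operatorname{rk}_{\mathrm P}(\pi(T))\ge|T|$ for all $T\subseteq S$, and $\operatorname{rk}_{\mathrm P}(F\cup\pi(T))>\operatorname{rk}_{\mathrm P}(F)+|T|$ for all $F\in\mathcal F$ and nonempty $T\subseteq S\setminus\pi^{-1}(F)$; $[\Sigma_{\mathrm P}]\in A^{n-r}(X_{\mathbf a})$ is the class with $\deg([\Sigma_{\mathrm P}][Z_\sigma])=1$ if $\sigma\in\Sigma_{\mathrm P}$ and $0$ otherwise for $r$-dimensional cones $\sigma$ of $\Sigma_{\mathbf a}$ ($Z_\sigma$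 the orbit closure). $A^\bullet(\mathrm P)=A^\bullet(X_{\mathbf a})/\operatorname{ann}([\Sigma_{\mathrm P}])$ and $\deg_{\mathrm P}(\xi)=\deg_{X_{\mathbf a}}(\xi'[\Sigma_{\mathrm P}])$ for a lift $\xi'$. *)

(* Defs.v *)
From HB Require Import structures.
From mathcomp Require Import all_boot all_order all_algebra.
From mathcomp Require Import mpoly.
Set Implicit Arguments. Unset Strict Implicit. Unset Printing Implicit Defensive.
Import Order.TTheory GRing.Theory Num.Theory.
Local Open Scope ring_scope.

Record polymatroid (m : nat) (a : 'I_m -> nat) := Polymatroid {
  prk : {set 'I_m} -> nat;
  prk0 : prk set0 = 0%N;
  prk_mono : forall A B : {set 'I_m}, A \subset B -> (prk A <= prk B)%N;
  prk_submod : forall A B : {set 'I_m},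
      (prk (A :|: B) + prk (A :&: B) <= prk A + prk B)%N;
  prk_type : forall i : 'I_m, (prk [set i] <= a i)%N }.

Section Polystellahedral.
Variables (m : nat) (a : 'I_m -> nat).

(* tilde E : the n = sum a_i element set, pi = tag *)
Definition tE := {i : 'I_m & 'I_(a i)}.
Definition pre (A : {set 'I_m}) : {set tE} := [set j : tE | tag j \in A].
Definition img (T : {set tE}) : {set 'I_m} := [set tag j | j in T].

Definition propS := {S : {set 'I_m} | S != setT}.

(* rays of Sigma_a: inl S  is  -e_{tE \ pi^-1(S)}  (divisor x_S), inr j is e_j *)
Definition ray := (propS + tE)%type.

Definition ray_vec (rho : ray) (j : tE) : int :=
  match rho with
  | inl S0 => if tag j \in val S0 then 0 else -1
  | inr k => ((j == k) : nat)%:Z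
  end.

Definition chainpart (C : {set ray}) : {set propS} := [set S | inl S \in C].
Definition indpart (C : {set ray}) : {set tE} := [set j | inr j \in C].

(* C spans a cone of Sigma_a iff it comes from a compatible pair I <= F *)
Definition is_cone (C : {set ray}) : bool :=
  [forall S1 in chainpart C, forall S2 in chainpart C,
      (val S1 \subset val S2) || (val S2 \subset val S1)] &&
  [forall A : {set 'I_m}, (pre A \subset indpart C) ==>
      [forall S in chainpart C, A \subset val S]].

Variable P : polymatroid a.
Local Notation rk := (prk P).
Definition prank : nat := rk setT.

Definition is_flat (F : {set 'I_m}) : bool :=
  [forall e : 'I_m, (e \notin F) ==> (rk F < rk (e |: F))%N].

Definition in_SigmaP (C : {set ray}) : bool :=
  [&& is_cone C,
      [forall S in chainpart C, is_flat (val S)],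
      [forall T : {set tE}, (T \subset indpart C) ==> (#|T| <= rk (img T))%N] &
      [forall S in chainpart C, forall T : {set tE},
         ((T \subset indpart C :\: pre (val S)) && (T != set0)) ==>
         (rk (val S) + #|T| < rk (val S :|: img T))%N]].

Definition nvar : nat := #|{: ray}|.
Definition X (rho : ray) : {mpoly rat[nvar]} := 'X_(enum_rank rho).
Definition mono (C : {set ray}) : {mpoly rat[nvar]} := \prod_(rho in C) X rho.
Definition linrel (j : tE) : {mpoly rat[nvar]} :=
  \sum_(rho : ray) ((ray_vec rho j)%:~R : rat) *: X rho.

Definition hvar (i : 'I_m) : {mpoly rat[nvar]} :=
  \sum_(S : propS | i \notin val S) X (inl S).

(* L is (a lift to Q[x_rho] of) deg_P : L(f) = deg_X(f_r [Sigma_P]), where f_r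
   is the degree-r part; i.e. L is linear, kills the Stanley-Reisner ideal and
   the linear relations, kills other degrees, and takes value 1/0 on the
   r-dimensional cone monomials according to membership in Sigma_P. *)
Definition deg_spec (L : {mpoly rat[nvar]} -> rat) : Prop :=
  [/\ (forall (c : rat) p q, L (c *: p + q) = c * L p + L q),
      (forall p C, ~~ is_cone C -> L (p * mono C) = 0),
      (forall p j, L (p * linrel j) = 0),
      (forall (d : nat) p, p \is d.-homog -> d != prank -> L p = 0) &
      (forall C, is_cone C -> #|C| = prank -> L (mono C) = (in_SigmaP C)%:R)].

(* integer points of the base polytope B(P) (nonnegativity is automatic for nat) *)
Definition in_base (u : 'I_m -> nat) : bool :=
  [forall S : {set 'I_m}, (\sum_(i in S) u i <= rk S)%N] &&
  (\sum_(i < m) u i == rk setT)%N.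

End Polystellahedral.

(* Main.v *)
Require Import Defs.
From HB Require Import structures.
From mathcomp Require Import all_boot all_order all_algebra.
From mathcomp Require Import mpoly.
Import Order.TTheory GRing.Theory Num.Theory.
Set Implicit Arguments. Unset Strict Implicit. Unset Printing Implicit Defensive.
Local Open Scope ring_scope.


Section Multi.
Variable V : comAlgType rat.

Definition fcons (T : Type) m (j : T) (u : 'I_m -> T) (i : 'I_m.+1) : T :=
  if unlift ord0 i is Some i' then u i' else j.

Lemma ffun_split (R : Type) (idx : R) (op : Monoid.com_law idx) (T : finType) m
   (F : {ffun 'I_m.+1 -> T} -> R) :
  \big[op/idx]_(u : {ffun 'I_m.+1 -> T}) F u =
  \big[op/idx]_(j : T) \big[op/idx]_(u : {ffun 'I_m -> T}) F [ffun i => fcons j u i].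
Proof.
rewrite pair_bigA /=.
rewrite (reindex (fun p : T * {ffun 'I_m -> T} => [ffun i => fcons p.1 p.2 i])) //.
exists (fun u : {ffun 'I_m.+1 -> T} => (u ord0, [ffun i => u (lift ord0 i)])).
  move=> [j u] _ /=; congr pair; first by rewrite ffunE /fcons unlift_none.
  by apply/ffunP => i; rewrite !ffunE /fcons liftK.
move=> u _; apply/ffunP => i; rewrite !ffunE /fcons.
by case: unliftP => [i'|] -> //; rewrite ffunE.
Qed.

End Multi.


Section Multi2.
Variable V : comAlgType rat.

Lemma ordsum_ext (N n : nat) (H : nat -> V) : (n <= N)%N ->
  \sum_(k < n.+1) H k = \sum_(j < N.+1) (if (j <= n)%N then H j else 0).
Proof.
move=> nN.
rewrite -(big_mkord xpredT H) -(big_mkord xpredT (fun j => if (j <= n)%N then H j else 0)).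
rewrite [RHS](big_cat_nat _ (n := n.+1)) //=.
rewrite [X in _ = _ + X]big_nat_cond [X in _ = _ + X]big1 ?addr0; last first.
  by move=> i /andP [/andP [Hi _] _]; rewrite leqNgt Hi.
by rewrite [RHS]big_nat_cond [LHS]big_nat_cond; apply: eq_bigr => i /andP [/andP [_ Hi] _]; rewrite -ltnS Hi.
Qed.

Lemma ffun_split_sum (T : finType) m (F : {ffun 'I_m.+1 -> T} -> V) :
  \sum_(u : {ffun 'I_m.+1 -> T}) F u =
  \sum_(j : T) \sum_(u : {ffun 'I_m -> T}) F [ffun i => fcons j u i].
Proof. exact: ffun_split. Qed.

Lemma multinom N : forall m (x : 'I_m -> V) n, (n <= N)%N ->
  ((n`!)%:R^-1 : rat) *: (\sum_(i < m) x i) ^+ n =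
  \sum_(u : {ffun 'I_m -> 'I_N.+1} | \sum_(i < m) (u i : nat) == n)
     \prod_(i < m) (((u i)`!)%:R^-1 *: x i ^+ u i).
Proof.
elim=> [|m IH] x n nN.
  rewrite big_ord0.
  have all0 : forall u : {ffun 'I_0 -> 'I_N.+1}, u = [ffun i => ord0].
    by move=> u; apply/ffunP => -[].
  case: n nN => [|n] nN.
    rewrite (big_pred1 [ffun i => ord0]); last by move=> u; rewrite big_ord0 eqxx /= (all0 u) eqxx.
    by rewrite big_ord0 expr0 fact0 invr1 scale1r.
  rewrite big_pred0; last by move=> u; rewrite big_ord0.
  by rewrite expr0n scaler0.
rewrite [RHS]big_mkcond [RHS]ffun_split_sum /=.
have E1 : forall (j : 'I_N.+1) (u : {ffun 'I_m -> 'I_N.+1}),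
   \sum_(i < m.+1) ([ffun i => fcons j u i] i : nat) = (j + \sum_(i < m) (u i : nat))%N.
  by move=> j u; rewrite big_ord_recl !ffunE /fcons unlift_none; congr addn; apply: eq_bigr => i _; rewrite ffunE liftK.
have E2 : forall (j : 'I_N.+1) (u : {ffun 'I_m -> 'I_N.+1}),
   \prod_(i < m.+1) (((([ffun i => fcons j u i] i : 'I_N.+1) : nat)`!)%:R^-1 *: x i ^+ [ffun i => fcons j u i] i) =
   (((j : nat)`!)%:R^-1 *: x ord0 ^+ j) * \prod_(i < m) (((u i : nat)`!)%:R^-1 *: x (lift ord0 i) ^+ u i).
  by move=> j u; rewrite big_ord_recl !ffunE /fcons unlift_none; congr (_ * _); apply: eq_bigr => i _; rewrite ffunE liftK.
have E3 : forall j : 'I_N.+1, \sum_(u : {ffun 'I_m -> 'I_N.+1})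
    (if (j + \sum_(i < m) (u i : nat) == n)%N then
      (((j : nat)`!)%:R^-1 *: x ord0 ^+ j) * \prod_(i < m) (((u i : nat)`!)%:R^-1 *: x (lift ord0 i) ^+ u i)
     else 0) =
   if (j <= n)%N then (((j : nat)`!)%:R^-1 *: x ord0 ^+ j) *
       ((((n - j)`!)%:R^-1 : rat) *: (\sum_(i < m) x (lift ord0 i)) ^+ (n - j))
   else 0.
  move=> j; rewrite IH; last by apply: leq_trans (leq_subr _ _) nN.
  case: ifP => jn.
    rewrite mulr_sumr [RHS]big_mkcond /=; apply: eq_bigr => u _.
    have -> : ((j + \sum_(i < m) (u i : nat)) == n)%N = (\sum_(i < m) (u i : nat) == n - j)%N.
      by apply/eqP/eqP => [<-|->]; rewrite ?addKn ?subnKC.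
    by case: ifP; rewrite ?mulr0.
  apply: big1 => u _; case: ifP => // /eqP E; move: jn; rewrite -E leq_addr //.
rewrite [RHS](eq_bigr (fun j : 'I_N.+1 => if (j <= n)%N then (((j : nat)`!)%:R^-1 *: x ord0 ^+ j) *
       ((((n - j)`!)%:R^-1 : rat) *: (\sum_(i < m) x (lift ord0 i)) ^+ (n - j))
   else 0)); last first.
  move=> j _; rewrite -E3; apply: eq_bigr => u _; rewrite E1 E2 //.
rewrite -(@ordsum_ext N n (fun j => (((j`!)%:R^-1 : rat) *: x ord0 ^+ j) *
       ((((n - j)`!)%:R^-1 : rat) *: (\sum_(i < m) x (lift ord0 i)) ^+ (n - j)))) //.
rewrite big_ord_recl addrC exprDn scaler_sumr; apply: eq_bigr => k _.
rewrite -scaler_nat scalerA -scalerAr -scalerAl scalerA mulrC.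
congr (_ *: _); last by rewrite mulrC.
have kn : (k <= n)%N by rewrite -ltnS.
rewrite -(bin_fact kn) natrM natrM.
have h1 : (k`!)%:R != 0 :> rat by rewrite pnatr_eq0 -lt0n fact_gt0.
have h2 : ((n - k)`!)%:R != 0 :> rat by rewrite pnatr_eq0 -lt0n fact_gt0.
have h3 : ('C(n, k))%:R != 0 :> rat by rewrite pnatr_eq0 -lt0n bin_gt0.
by rewrite !invfM mulVKf // mulrC.
Qed.

End Multi2.


Section Key.
Variables (m : nat) (a : 'I_m -> nat) (P : polymatroid a).
Variable L : {mpoly rat[nvar a]} -> rat.
Hypothesis hL : deg_spec P L.

Local Notation MP := {mpoly rat[nvar a]}.

Lemma L_lin (c : rat) p q : L (c *: p + q) = c * L p + L q.
Proof. by case: hL. Qed.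

Lemma L0 : L 0 = 0.
Proof.
have := L_lin 1 0 0; rewrite addr0 scale1r mul1r.
by move/(congr1 (fun x => x - L 0)); rewrite /= subrr addrK => ->.
Qed.

Lemma L_add p q : L (p + q) = L p + L q.
Proof. by have := L_lin 1 p q; rewrite scale1r mul1r. Qed.

Lemma L_scale c p : L (c *: p) = c * L p.
Proof. by rewrite -[c *: p]addr0 L_lin L0 addr0. Qed.

Lemma L_sum (I : Type) (r : seq I) (Pr : pred I) (F : I -> MP) :
  L (\sum_(i <- r | Pr i) F i) = \sum_(i <- r | Pr i) L (F i).
Proof. exact: (big_morph L L_add L0). Qed.

Lemma L_noncone p C : ~~ is_cone C -> L (p * mono C) = 0.
Proof. by case: hL => _ H _ _ _; apply: H. Qed.

Lemma L_linrel p j : L (p * linrel j) = 0.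
Proof. by case: hL => _ _ H _ _; apply: H. Qed.

Lemma L_cone C : is_cone C -> #|C| = prank P -> L (mono C) = (in_SigmaP P C)%:R.
Proof. by case: hL => _ _ _ _ H; apply: H. Qed.

Definition Lrel (p q : MP) := forall s, L (s * p) = L (s * q).

Lemma Lrel_refl p : Lrel p p. Proof. by []. Qed.

Lemma Lrel_mul p q p' q' : Lrel p q -> Lrel p' q' -> Lrel (p * p') (q * q').
Proof.
move=> H H' s.
by rewrite mulrA H' mulrAC H mulrAC -mulrA.
Qed.

Lemma Lrel_prod (I : Type) (r : seq I) (Pr : pred I) (F G : I -> MP) :
  (forall i, Pr i -> Lrel (F i) (G i)) ->
  Lrel (\prod_(i <- r | Pr i) F i) (\prod_(i <- r | Pr i) G i).
Proof.
move=> H; apply: (big_ind2 Lrel) => //; exact: Lrel_mul.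
Qed.

Lemma linrelE j : linrel j = X (inr j) - hvar a (tag j).
Proof.
rewrite /linrel big_sumType /= addrC; congr (_ + _).
  rewrite (bigD1 j) //= eqxx /= scale1r big1 ?addr0 //.
  by move=> k /negbTE nkj; rewrite eq_sym nkj scale0r.
rewrite /hvar -sumrN [RHS]big_mkcond /=; apply: eq_bigr => S _.
by case: ifP => _ /=; rewrite ?scale0r ?scaleN1r.
Qed.

Lemma Lrel_h j : Lrel (hvar a (tag j)) (X (inr j)).
Proof.
move=> s; have H := L_linrel s j; rewrite linrelE mulrBr in H.
have -> : s * X (inr j) = s * hvar a (tag j) + (s * X (inr j) - s * hvar a (tag j)).
  by rewrite addrC subrK.
by rewrite L_add H addr0.
Qed.


Lemma narrow_ord (R : Type) (idx : R) (op : Monoid.law idx) n v (F : nat -> R) :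
  (v <= n)%N -> \big[op/idx]_(k < n | (k < v)%N) F k = \big[op/idx]_(k < v) F k.
Proof.
move=> vn.
rewrite (eq_bigl (fun k : 'I_n => xpredT k && (k < v)%N)) //.
by rewrite (big_ord_narrow_cond (P := xpredT) (F := fun k : 'I_n => F k) vn).
Qed.

Lemma card_lt n v : (v <= n)%N -> (\sum_(k < n | (k < v)%N) 1)%N = v.
Proof.
by move=> vn; rewrite (narrow_ord _ (fun _ => 1%N) vn) sum1_card card_ord.
Qed.

Local Notation TT := (Tagged (fun i : 'I_m => 'I_(a i))).

Lemma big_sig_split (R : Type) (idx : R) (op : Monoid.com_law idx)
    (Q : pred (tE a)) (F : tE a -> R) :
  \big[op/idx]_(j | Q j) F j =
  \big[op/idx]_(i : 'I_m) \big[op/idx]_(k : 'I_(a i) | Q (TT k)) F (TT k).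
Proof.
rewrite (partition_big (fun j : tE a => tag j) xpredT) //=.
apply: eq_bigr => i _.
rewrite (eq_bigl (fun k : 'I_(a i) => k \in [set k | Q (TT k)])); last by move=> k; rewrite inE.
rewrite -(big_imset _ (h := TT)); last by move=> k1 k2 _ _; apply: eq_from_Tagged.
apply: eq_bigl => j; apply/andP/imsetP => [[Qj /eqP e]|[k]].
  by exists (etagged e); rewrite ?inE etaggedK.
by rewrite inE => Qk ->; split.
Qed.

Definition Dset (v : 'I_m -> nat) : {set ray a} :=
  [set rho : ray a | if rho is inr j then (tagged j < v (tag j))%N else false].

Lemma cardD (v : 'I_m -> nat) (S : {set 'I_m}) : (forall i, v i <= a i)%N ->
  #|[set j : tE a | (tag j \in S) && (tagged j < v (tag j))%N]| = (\sum_(i in S) v i)%N.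
Proof.
move=> va; rewrite -sum1_card.
rewrite (eq_bigl (fun j : tE a => (tag j \in S) && (tagged j < v (tag j))%N)); last by move=> j; rewrite inE.
rewrite big_sig_split /= [RHS]big_mkcond /=; apply: eq_bigr => i _.
case: ifP => iS /=; last by rewrite big_pred0.
exact: card_lt.
Qed.

Lemma mono_Dset v : mono (Dset v) =
   \prod_(i < m) \prod_(k : 'I_(a i) | (k < v i)%N) X (inr (TT k)).
Proof.
rewrite /mono big_sumType /= big_pred0; last by move=> S; rewrite inE.
rewrite mul1r (eq_bigl (fun j : tE a => (tagged j < v (tag j))%N)); last by move=> j; rewrite inE.
by rewrite big_sig_split.
Qed.

Lemma card_Dset v : (forall i, v i <= a i)%N -> #|Dset v| = (\sum_(i < m) v i)%N.
Proof.
move=> va; rewrite -sum1_card big_sumType /= big_pred0; last by move=> S; rewrite inE.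
have -> : (\sum_(i < m) v i)%N = (\sum_(i in [set: 'I_m]) v i)%N by apply: eq_bigl => i; rewrite inE.
rewrite add0n -(cardD setT va) -sum1_card; apply: eq_bigl => j.
by rewrite !inE.
Qed.

Lemma hv_prod v : (forall i, v i <= a i)%N ->
  \prod_(i < m) hvar a i ^+ v i = \prod_(i < m) \prod_(k : 'I_(a i) | (k < v i)%N) hvar a i.
Proof.
move=> va; apply: eq_bigr => i _.
rewrite (narrow_ord _ (fun _ => hvar a i) (va i)).
by rewrite prodr_const card_ord.
Qed.

Lemma repl v : (forall i, v i <= a i)%N -> Lrel (\prod_(i < m) hvar a i ^+ v i) (mono (Dset v)).
Proof.
move=> va; rewrite hv_prod // mono_Dset.
apply: Lrel_prod => i _; apply: Lrel_prod => k _.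
exact: (Lrel_h (TT k)).
Qed.


Lemma is_cone_Dset v : is_cone (Dset v).
Proof.
rewrite /is_cone; apply/andP; split.
  by apply/forallP => S1; apply/implyP; rewrite /chainpart !inE.
apply/forallP => A; apply/implyP => _; apply/forallP => S; apply/implyP.
by rewrite /chainpart !inE.
Qed.

Lemma inSP_Dset v : (forall i, v i <= a i)%N -> (\sum_(i < m) v i)%N = prank P ->
  in_SigmaP P (Dset v) = in_base P v.
Proof.
move=> va sv.
have ind : indpart (Dset v) = [set j : tE a | (tagged j < v (tag j))%N].
  by apply/setP => j; rewrite /indpart !inE.
have ch : forall S, (S \in chainpart (Dset v)) = false.
  by move=> S; rewrite /chainpart !inE.
rewrite /in_SigmaP /in_base is_cone_Dset ind.
apply/idP/idP.
  case/and4P => _ _ /forallP H _; apply/andP; split; last by rewrite sv.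
  apply/forallP => S.
  have sub : [set j : tE a | (tag j \in S) && (tagged j < v (tag j))%N] \subset
             [set j : tE a | (tagged j < v (tag j))%N].
    by apply/subsetP => j; rewrite !inE => /andP [].
  have := H [set j : tE a | (tag j \in S) && (tagged j < v (tag j))%N].
  rewrite sub /= cardD // => le; apply: leq_trans le _.
  apply: prk_mono; apply/subsetP => i /imsetP [j]; rewrite inE => /andP [jS _] ->.
  exact: jS.
case/andP => /forallP H _; apply/and4P; split => //.
- by apply/forallP => S; apply/implyP; rewrite ch.
- apply/forallP => T; apply/implyP => /subsetP Tsub.
  apply: leq_trans (H (img T)).
  rewrite -cardD //; apply: subset_leq_card; apply/subsetP => j jT.
  have := Tsub j jT; rewrite !inE => ->; rewrite andbT.
  by rewrite /img; apply: imset_f.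
- by apply/forallP => S; apply/implyP; rewrite ch.
Qed.

Lemma noncone (i : 'I_m) (S : propS m) (v : 'I_m -> nat) :
  i \notin val S -> v i = a i -> ~~ is_cone (inl S |: Dset v).
Proof.
move=> iS vi; apply/negP => /andP [_ /forallP /(_ [set i]) /implyP H].
have sub : pre a [set i] \subset indpart (inl S |: Dset v).
  apply/subsetP => -[i' k]; rewrite /pre /indpart !inE /= => /eqP e; subst i'.
  by rewrite vi ltn_ord.
have := H sub => /forallP /(_ S) /implyP.
have -> : S \in chainpart (inl S |: Dset v) by rewrite /chainpart inE setU11.
by move=> /(_ isT); rewrite sub1set (negbTE iS).
Qed.

Lemma caseB (u : 'I_m -> nat) (i : 'I_m) : (a i < u i)%N ->
  L (\prod_(i' < m) hvar a i' ^+ u i') = 0.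
Proof.
move=> ai.
pose v := fun i' : 'I_m => if i' == i then a i else 0%N.
have va : forall i', (v i' <= a i')%N.
  by move=> i'; rewrite /v; case: (i' =P i) => [->|_].
have vu : forall i', (v i' <= u i')%N.
  by move=> i'; rewrite /v; case: (i' =P i) => [->|_] //; exact: ltnW.
have -> : \prod_(i' < m) hvar a i' ^+ u i' =
   (\prod_(i' < m) hvar a i' ^+ (u i' - v i')) * \prod_(i' < m) hvar a i' ^+ v i'.
  by rewrite -big_split; apply: eq_bigr => i' _ /=; rewrite -exprD subnK.
rewrite (repl va) (bigD1 i) //=.
have vi : v i = a i by rewrite /v eqxx.
have : (0 < u i - v i)%N by rewrite vi subn_gt0.
move/prednK <-; rewrite exprS -mulrA mulrCA -[hvar a i * _ * _]mulrA [hvar a i * (_ * _)]mulrCA mulrA.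
rewrite /hvar mulr_suml mulr_sumr L_sum big1 // => S iS.
rewrite /mono -big_setU1 /=; last by rewrite inE.
exact: (L_noncone _ (noncone iS vi)).
Qed.

Lemma key (u : 'I_m -> nat) : (\sum_(i < m) u i)%N = prank P ->
  L (\prod_(i < m) hvar a i ^+ u i) = (in_base P u)%:R.
Proof.
move=> su.
case: (boolP [forall i, (u i <= a i)%N]) => [/forallP ua | /forallPn [i]].
  have := repl ua 1; rewrite !mul1r => ->.
  by rewrite L_cone ?is_cone_Dset ?card_Dset // inSP_Dset.
rewrite -ltnNge => ai; rewrite (caseB ai).
have : ~~ in_base P u.
  apply/negP => /andP [/forallP /(_ [set i])]; rewrite big_set1 => H _.
  by have := leq_trans H (prk_type P i); rewrite leqNgt ai.
by move/negbTE ->.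
Qed.

End Key.

Theorem corollary1p4 (m : nat) (a : 'I_m -> nat) (ha : forall i, (0 < a i)%N)
    (P : polymatroid a) (L : {mpoly rat[nvar a]} -> rat) (hL : deg_spec P L)
    (t : 'I_m -> rat) :
  ((prank P)`!%:R)^-1 * L ((\sum_(i < m) t i *: hvar a i) ^+ prank P) =
  \sum_(u : {ffun 'I_m -> 'I_(prank P).+1} | in_base P (fun i => nat_of_ord (u i)))
     \prod_(i < m) (t i ^+ u i / ((u i)`!)%:R).
Proof.
rewrite -(L_scale hL) (@multinom _ (prank P)) // (L_sum hL).
rewrite [RHS]big_mkcond /= [LHS]big_mkcond /=.
apply: eq_bigr => u _.
have E : \prod_(i < m) ((((u i : nat)`!)%:R^-1 : rat) *: (t i *: hvar a i) ^+ u i) =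
   (\prod_(i < m) (t i ^+ u i / ((u i)`!)%:R)) *: \prod_(i < m) hvar a i ^+ u i.
  by rewrite -scaler_prod; apply: eq_bigr => i _; rewrite exprZn scalerA mulrC.
case: ifP => su.
  rewrite E (L_scale hL) (key hL (u := fun i => nat_of_ord (u i))); last exact/eqP.
  by case: (in_base _ _); rewrite ?mulr1 ?mulr0.
have -> : in_base P (fun i => nat_of_ord (u i)) = false.
  by apply/negP => /andP [_ /eqP H]; move: su; rewrite H eqxx.
by [].
Qed.
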